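(* Let $(H_i<G_i)_{i\in\mathbb N}$ be a sequence of inclusions of groups, let $\omega$ be a free ultrafilter on $\mathbb N$, and let $\mathbf G=\prod_\omega G_i$ and $\mathbf H=\prod_\omega H_i$ be algebraic ultraproducts. Then $\ast_{\mathbf H}\mathbf G$ naturally embeds into the algebraic ultraproduct $\mathbf K=\prod_\omega \ast_{H_i}G_i$.
   Context: For a sequence of groups $(L_i)$ and a free ultrafilter $\omega$ on $\mathbb N$, the algebraic ultraproduct is $\prod_\omega L_i=(\prod_{i\in\mathbb N}L_i)/N$ where $N=\{(g_i): \{i: g_i=1\}\in\omega\}$. For a group $G$ and subgroup $H<G$, $\ast_H G$ denotes the amalgamated free product of countably infinitely many copies of $G$ over the common subgroup $H$. *)

(* Defs.v *)
(* Groups are setoid groups (carrier + equivalence relation),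
   so that quotient groups such as ultraproducts need no quotient types. *)
From Stdlib Require Import Setoid.

Set Implicit Arguments.
Unset Strict Implicit.

Record grp := Grp {
  car :> Type;
  geq : car -> car -> Prop;
  gmul : car -> car -> car;
  gone : car;
  ginv : car -> car;
  geq_refl : forall x, geq x x;
  geq_sym : forall x y, geq x y -> geq y x;
  geq_trans : forall x y z, geq x y -> geq y z -> geq x z;
  gmul_compat : forall x x' y y', geq x x' -> geq y y' -> geq (gmul x y) (gmul x' y');
  ginv_compat : forall x x', geq x x' -> geq (ginv x) (ginv x');
  gmulA : forall x y z, geq (gmul (gmul x y) z) (gmul x (gmul y z));
  gmul1 : forall x, geq (gmul gone x) x;
  gmulV : forall x, geq (gmul (ginv x) x) gone
}.

Definition is_hom (G L : grp) (f : G -> L) : Prop :=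
  (forall x y, geq x y -> geq (f x) (f y)) /\
  (forall x y, geq (f (gmul x y)) (gmul (f x) (f y))).

Definition ginjective (G L : grp) (f : G -> L) : Prop :=
  forall x y, geq (f x) (f y) -> geq x y.

Record subgrp (G : grp) := Subgrp {
  smem :> G -> Prop;
  smem_compat : forall x y, geq x y -> smem x -> smem y;
  smem1 : smem (gone G);
  smemM : forall x y, smem x -> smem y -> smem (gmul x y);
  smemV : forall x, smem x -> smem (ginv x)
}.

Record is_ultrafilter (U : (nat -> Prop) -> Prop) : Prop := {
  uf_full : U (fun _ => True);
  uf_empty : ~ U (fun _ => False);
  uf_mono : forall A B : nat -> Prop, (forall i, A i -> B i) -> U A -> U B;
  uf_inter : forall A B : nat -> Prop, U A -> U B -> U (fun i => A i /\ B i);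
  uf_ultra : forall A : nat -> Prop, U A \/ U (fun i => ~ A i)
}.

Definition is_free_ultrafilter (U : (nat -> Prop) -> Prop) : Prop :=
  is_ultrafilter U /\ (forall n : nat, exists A, U A /\ ~ A n).

Section Ultra.
Variables (G : nat -> grp) (U : (nat -> Prop) -> Prop) (hU : is_ultrafilter U).

Definition ucar := forall i, G i.
Definition ueq (x y : ucar) : Prop := U (fun i => geq (x i) (y i)).

Lemma ueq_refl x : ueq x x.
Proof. eapply (uf_mono hU); [|exact (uf_full hU)]; intros i _; apply geq_refl . Qed.
Lemma ueq_sym x y : ueq x y -> ueq y x.
Proof. apply (uf_mono hU); intros i; apply geq_sym. Qed.
Lemma ueq_trans x y z : ueq x y -> ueq y z -> ueq x z.
Proof. intros a b; eapply (uf_mono hU); [|exact (uf_inter hU a b)]; simpl; intros i [p q]; eapply geq_trans; eauto. Qed.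

Definition umul (x y : ucar) : ucar := fun i => gmul (x i) (y i).
Definition uone : ucar := fun i => gone (G i).
Definition uinv (x : ucar) : ucar := fun i => ginv (x i).

Lemma umul_compat x x' y y' : ueq x x' -> ueq y y' -> ueq (umul x y) (umul x' y').
Proof. intros a b; eapply (uf_mono hU); [|exact (uf_inter hU a b)]; simpl; intros i [p q]; apply gmul_compat; auto. Qed.
Lemma uinv_compat x x' : ueq x x' -> ueq (uinv x) (uinv x').
Proof. apply (uf_mono hU); intros i; apply ginv_compat. Qed.
Lemma umulA x y z : ueq (umul (umul x y) z) (umul x (umul y z)).
Proof. eapply (uf_mono hU); [|exact (uf_full hU)]; intros i _; apply gmulA . Qed.
Lemma umul1 x : ueq (umul uone x) x.
Proof. eapply (uf_mono hU); [|exact (uf_full hU)]; intros i _; apply gmul1 . Qed.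
Lemma umulV x : ueq (umul (uinv x) x) uone.
Proof. eapply (uf_mono hU); [|exact (uf_full hU)]; intros i _; apply gmulV . Qed.

Definition ultraprod : grp :=
  @Grp ucar ueq umul uone uinv ueq_refl ueq_sym ueq_trans umul_compat
       uinv_compat umulA umul1 umulV.

Variable H : forall i, subgrp (G i).
Definition usmem (x : ultraprod) : Prop := U (fun i => H i (x i)).

Lemma usmem_compat x y : geq x y -> usmem x -> usmem y.
Proof. intros a b; eapply (uf_mono hU); [|exact (uf_inter hU a b)]; simpl; intros i [p q]; eapply smem_compat; eauto. Qed.
Lemma usmem1 : usmem (gone ultraprod).
Proof. eapply (uf_mono hU); [|exact (uf_full hU)]; intros i _; apply smem1 . Qed.
Lemma usmemM x y : usmem x -> usmem y -> usmem (gmul x y).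
Proof. intros a b; eapply (uf_mono hU); [|exact (uf_inter hU a b)]; simpl; intros i [p q]; apply smemM; auto. Qed.
Lemma usmemV x : usmem x -> usmem (ginv x).
Proof. apply (uf_mono hU); intros i; apply smemV. Qed.

Definition ultrasub : subgrp ultraprod :=
  @Subgrp ultraprod usmem usmem_compat usmem1 usmemM usmemV.
End Ultra.

(** * Amalgamated free product  *_H G  of countably many copies of G over H,
      defined by its universal property: copies indexed by j : nat,
      embeddings inj j : G -> P agreeing on H, universal among such families. *)
Record amalg (G : grp) (H : subgrp G) := Amalg {
  apg :> grp;
  ainj : nat -> G -> apg;
  ainj_hom : forall j, is_hom (ainj j);
  ainj_agree : forall j k (h : G), H h -> geq (ainj j h) (ainj k h);
  auniv : forall (L : grp) (f : nat -> G -> L),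
      (forall j, is_hom (f j)) ->
      (forall j k (h : G), H h -> geq (f j h) (f k h)) ->
      exists phi : apg -> L, is_hom phi /\ forall j g, geq (phi (ainj j g)) (f j g);
  auniq : forall (L : grp) (phi psi : apg -> L), is_hom phi -> is_hom psi ->
      (forall j g, geq (phi (ainj j g)) (psi (ainj j g))) ->
      forall x, geq (phi x) (psi x)
}.

(* Main.v *)
Require Import Defs.
From Stdlib Require Import Setoid Morphisms List Arith PeanoNat Classical ClassicalEpsilon PropExtensionality FunctionalExtensionality.
Import ListNotations.

Add Parametric Relation (G : grp) : (car G) (@geq G)
  reflexivity proved by (@geq_refl G) symmetry proved by (@geq_sym G)
  transitivity proved by (@geq_trans G) as geq_rel.
Add Parametric Morphism (G : grp) : (@gmul G) with signature (@geq G) ==> (@geq G) ==> (@geq G) as gmul_mor.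
Proof. intros; apply gmul_compat; auto. Qed.
Add Parametric Morphism (G : grp) : (@ginv G) with signature (@geq G) ==> (@geq G) as ginv_mor.
Proof. intros; apply ginv_compat; auto. Qed.

Section GL.
Context {G : grp}.
Implicit Types x y z a b : G.
Lemma mulV_r x : geq (gmul x (ginv x)) (gone G).
Proof.
  set (y := ginv x).
  transitivity (gmul (gmul (ginv y) y) (gmul x y)).
  { rewrite gmulV, gmul1. reflexivity. }
  rewrite gmulA, <- (gmulA y x y). unfold y at 2 3. rewrite gmulV, gmul1. apply gmulV.
Qed.
Lemma mul1_r x : geq (gmul x (gone G)) x.
Proof. rewrite <- (gmulV x). rewrite <- gmulA, mulV_r, gmul1. reflexivity. Qed.
Lemma cancel_l z x y : geq (gmul z x) (gmul z y) -> geq x y.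
Proof. intro E. rewrite <- (gmul1 x), <- (gmul1 y), <- (gmulV z), !gmulA, E. reflexivity. Qed.
Lemma inv_uniq a b : geq (gmul a b) (gone G) -> geq a (ginv b).
Proof. intro E. rewrite <- (mul1_r a), <- (mulV_r b), <- gmulA, E, gmul1. reflexivity. Qed.
Lemma inv_inv a : geq (ginv (ginv a)) a.
Proof. symmetry. apply inv_uniq. apply mulV_r. Qed.
Lemma inv_mul a b : geq (ginv (gmul a b)) (gmul (ginv b) (ginv a)).
Proof. symmetry. apply inv_uniq. rewrite gmulA, <- (gmulA (ginv a)), gmulV, gmul1, gmulV. reflexivity. Qed.
Lemma eq_of_mulinv x y : geq (gmul x (ginv y)) (gone G) -> geq x y.
Proof. intro E. rewrite <- (mul1_r x), <- (gmulV y), <- gmulA, E, gmul1. reflexivity. Qed.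
Lemma mulinv_of_eq x y : geq x y -> geq (gmul x (ginv y)) (gone G).
Proof. intro E. rewrite E. apply mulV_r. Qed.
Lemma mul_invK x y : geq (gmul (gmul x (ginv y)) y) x.
Proof. rewrite gmulA, gmulV, mul1_r. reflexivity. Qed.
Lemma inv_mulK x y : geq (gmul (ginv x) (gmul x y)) y.
Proof. rewrite <- gmulA, gmulV, gmul1. reflexivity. Qed.
Lemma mul_invK' x y : geq (gmul x (gmul (ginv x) y)) y.
Proof. rewrite <- gmulA, mulV_r, gmul1. reflexivity. Qed.
End GL.

Lemma hom_one {G L : grp} (f : G -> L) : is_hom f -> geq (f (gone G)) (gone L).
Proof.
  intros [c m]. apply (cancel_l (f (gone G))).
  eapply geq_trans; [apply geq_sym, m|]. eapply geq_trans; [apply c, gmul1|]. apply geq_sym, mul1_r.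
Qed.
Lemma hom_inv {G L : grp} (f : G -> L) x : is_hom f -> geq (f (ginv x)) (ginv (f x)).
Proof.
  intros h. apply inv_uniq. pose proof (@hom_one G L f h) as h1. destruct h as [c m].
  eapply geq_trans; [apply geq_sym, m|]. eapply geq_trans; [apply c, gmulV|]. exact h1.
Qed.

Lemma sub_compat (G : grp) (H : subgrp G) x y : geq x y -> (H x <-> H y).
Proof. split; apply smem_compat; auto. symmetry; auto. Qed.

Section Sym.
Variables (X : Type) (xeq : X -> X -> Prop) (xrefl : forall x, xeq x x)
  (xsym : forall x y, xeq x y -> xeq y x) (xtrans : forall x y z, xeq x y -> xeq y z -> xeq x z).
Record perm := Perm { pf : X -> X; pinv : X -> X;
  pf_c : forall x y, xeq x y -> xeq (pf x) (pf y);
  pinv_c : forall x y, xeq x y -> xeq (pinv x) (pinv y);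
  pf_pinv : forall x, xeq (pf (pinv x)) x;
  pinv_pf : forall x, xeq (pinv (pf x)) x }.
Definition peq (p q : perm) := forall x, xeq (pf p x) (pf q x).
Lemma pmul_1 (p q : perm) : forall x y, xeq x y -> xeq (pf p (pf q x)) (pf p (pf q y)).
Proof. intros; do 2 apply pf_c; auto. Qed.
Lemma pmul_2 (p q : perm) : forall x y, xeq x y -> xeq (pinv q (pinv p x)) (pinv q (pinv p y)).
Proof. intros; do 2 apply pinv_c; auto. Qed.
Lemma pmul_3 (p q : perm) : forall x, xeq (pf p (pf q (pinv q (pinv p x)))) x.
Proof. intros. eapply xtrans; [apply pf_c, pf_pinv|apply pf_pinv]. Qed.
Lemma pmul_4 (p q : perm) : forall x, xeq (pinv q (pinv p (pf p (pf q x)))) x.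
Proof. intros. eapply xtrans; [apply pinv_c, pinv_pf|apply pinv_pf]. Qed.
Definition pmul (p q : perm) : perm :=
  @Perm (fun x => pf p (pf q x)) (fun x => pinv q (pinv p x)) (pmul_1 p q) (pmul_2 p q) (pmul_3 p q) (pmul_4 p q).
Definition pone : perm := @Perm (fun x => x) (fun x => x) (fun x y h => h) (fun x y h => h) xrefl xrefl.
Definition pinvp (p : perm) : perm := @Perm (pinv p) (pf p) (@pinv_c p) (@pf_c p) (@pinv_pf p) (@pf_pinv p).
Lemma peq_refl p : peq p p. Proof. intro; auto. Qed.
Lemma peq_sym p q : peq p q -> peq q p. Proof. intros h x; auto. Qed.
Lemma peq_trans p q r : peq p q -> peq q r -> peq p r. Proof. intros h k x; eauto. Qed.
Lemma pmul_c p p' q q' : peq p p' -> peq q q' -> peq (pmul p q) (pmul p' q').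
Proof. intros h k x; simpl. eapply xtrans; [apply pf_c, k| apply h]. Qed.
Lemma pinv_cc p p' : peq p p' -> peq (pinvp p) (pinvp p').
Proof. intros h x; simpl.
  eapply xtrans; [apply pinv_c, xsym, (pf_pinv p')|].
  eapply xtrans; [apply pinv_c, xsym, h|]. apply pinv_pf. Qed.
Lemma pmulA p q r : peq (pmul (pmul p q) r) (pmul p (pmul q r)). Proof. intro; simpl; auto. Qed.
Lemma pmul1 p : peq (pmul pone p) p. Proof. intro; simpl; auto. Qed.
Lemma pmulV p : peq (pmul (pinvp p) p) pone. Proof. intro; simpl; apply pinv_pf. Qed.
Definition Sym : grp := @Grp perm peq pmul pone pinvp peq_refl peq_sym peq_trans pmul_c pinv_cc pmulA pmul1 pmulV.
End Sym.

Definition hd_ne {A : Type} (j : nat) (w : list (nat * A)) : Prop :=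
  match w with [] => True | (k, _) :: _ => k <> j end.
Lemma hd_ne_map {A B : Type} j (l : list (nat * A)) (l' : list (nat * B)) :
  map fst l = map fst l' -> hd_ne j l -> hd_ne j l'.
Proof. destruct l as [|[]], l' as [|[]]; simpl; intros E; try discriminate; auto.
  injection E; intros; subst; auto. Qed.

Section NF.
Context {G : grp} (H : subgrp G).

Fixpoint red (w : list (nat * G)) : Prop :=
  match w with [] => True | (j, g) :: w' => ~ H g /\ hd_ne j w' /\ red w' end.

Definition coset (x : G) : G -> Prop := fun y => H (gmul x (ginv y)).
Definition rep (x : G) : G := epsilon (inhabits (gone G)) (coset x).
Lemma rep_spec x : H (gmul x (ginv (rep x))).
Proof. apply (epsilon_spec (inhabits (gone G)) (coset x)). exists x. unfold coset.
  eapply smem_compat; [|apply smem1]. symmetry; apply mulV_r. Qed.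
Lemma coset_eq x y : H (gmul x (ginv y)) -> coset x = coset y.
Proof. intro h. apply functional_extensionality; intro z. apply propositional_extensionality.
  unfold coset. split; intro k.
  - eapply smem_compat; [|apply smemM; [apply smemV, h| apply k]].
    rewrite inv_mul, inv_inv, gmulA, <- (gmulA (ginv x)), gmulV, gmul1. reflexivity.
  - eapply smem_compat; [|apply smemM; [apply h| apply k]].
    rewrite gmulA, <- (gmulA (ginv y)), gmulV, gmul1. reflexivity.
Qed.
Lemma rep_eq x y : H (gmul x (ginv y)) -> rep x = rep y.
Proof. intro h. unfold rep. rewrite (coset_eq x y h). reflexivity. Qed.
Lemma rep_compat x y : geq x y -> rep x = rep y.
Proof. intro e. apply rep_eq. eapply smem_compat; [|apply smem1]. rewrite e. symmetry; apply mulV_r. Qed.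
Lemma rep_idem x : rep (rep x) = rep x.
Proof. apply rep_eq. eapply smem_compat; [|apply smemV, (rep_spec x)].
  rewrite inv_mul, inv_inv. reflexivity. Qed.
Lemma rep_notH x : ~ H x -> ~ H (rep x).
Proof. intros n h. apply n. eapply smem_compat; [|apply smemM; [apply (rep_spec x)|apply h]].
  apply mul_invK. Qed.
Lemma rep_Hmul h c : H h -> rep (gmul h c) = rep c.
Proof. intro k. apply rep_eq. eapply smem_compat; [|apply k].
  rewrite gmulA, mulV_r, mul1_r. reflexivity. Qed.

Definition dec (P : Prop) := excluded_middle_informative P.

Definition RX := (car G * list (nat * car G))%type.
Fixpoint validw (w : list (nat * G)) : Prop :=
  match w with [] => True | (j, c) :: w' => ~ H c /\ rep c = c /\ hd_ne j w' /\ validw w' end.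
Definition valid (x : RX) := H (fst x) /\ validw (snd x).
Definition req (x y : RX) := geq (fst x) (fst y) /\ snd x = snd y.
Lemma req_refl x : req x x. Proof. split; reflexivity. Qed.
Lemma req_sym x y : req x y -> req y x. Proof. intros [a b]; split; symmetry; auto. Qed.
Lemma req_trans x y z : req x y -> req y z -> req x z.
Proof. intros [a b] [c d]; split; [rewrite a; auto| congruence]. Qed.

Definition norm (j : nat) (y : G) (w : list (nat * G)) : RX :=
  if dec (H y) then (y, w) else (gmul y (ginv (rep y)), (j, rep y) :: w).
Definition split (j : nat) (x : RX) : RX :=
  match snd x with
  | (k, c) :: w1 => if Nat.eq_dec k j then (gmul (fst x) c, w1) else x
  | [] => x end.
Definition act (j : nat) (g : G) (x : RX) : RX :=
  norm j (gmul g (fst (split j x))) (snd (split j x)).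

Lemma norm_valid j y w : validw w -> hd_ne j w -> valid (norm j y w).
Proof. intros v n. unfold norm. destruct (dec (H y)) as [h|h]; split; simpl; auto.
  apply rep_spec. repeat split; auto. apply rep_notH; auto. apply rep_idem. Qed.
Lemma split_valid j x : valid x -> validw (snd (split j x)) /\ hd_ne j (snd (split j x)).
Proof. destruct x as [h w]; intros [vh vw]. unfold split; simpl in *.
  destruct w as [|[k c] w1]; simpl in *; auto.
  destruct (Nat.eq_dec k j); simpl in *; subst; intuition. Qed.
Lemma act_valid j g x : valid x -> valid (act j g x).
Proof. intro v. destruct (split_valid j x v). apply norm_valid; auto. Qed.
Lemma split_ne j x : hd_ne j (snd x) -> split j x = x.
Proof. destruct x as [h w]; unfold split; simpl. destruct w as [|[k c] w1]; simpl; auto.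
  intro n. destruct (Nat.eq_dec k j); [contradiction|auto]. Qed.
Lemma norm_compat j y y' w : geq y y' -> req (norm j y w) (norm j y' w).
Proof. intro e. unfold norm. rewrite (rep_compat _ _ e).
  destruct (dec (H y)) as [h|h], (dec (H y')) as [h'|h'].
  - split; simpl; auto.
  - exfalso; apply h'; eapply smem_compat; eauto.
  - exfalso; apply h; eapply smem_compat; [symmetry|]; eauto.
  - split; simpl; auto. rewrite e; reflexivity. Qed.
Lemma split_compat j x x' : req x x' -> req (split j x) (split j x').
Proof. destruct x as [h w], x' as [h' w']; intros [e1 e2]; simpl in *; subst w'.
  unfold split; simpl. destruct w as [|[k c] w1]; simpl.
  - split; auto.
  - destruct (Nat.eq_dec k j); split; simpl; auto. rewrite e1; reflexivity. Qed.
Lemma act_compat j g g' x x' : geq g g' -> req x x' -> req (act j g x) (act j g' x').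
Proof. intros e r. unfold act. destruct (split_compat j _ _ r) as [r1 r2]. rewrite <- r2.
  apply norm_compat. rewrite e, r1. reflexivity. Qed.
Lemma act_norm j g y w : hd_ne j w -> req (act j g (norm j y w)) (norm j (gmul g y) w).
Proof. intro n. unfold norm at 1. destruct (dec (H y)) as [h|h].
  - unfold act. rewrite split_ne by exact n. apply req_refl.
  - unfold act, split; simpl. destruct (Nat.eq_dec j j) as [_|c]; [|congruence]; simpl.
    apply norm_compat. rewrite mul_invK. reflexivity. Qed.
Lemma act_mul j g1 g2 x : valid x -> req (act j (gmul g1 g2) x) (act j g1 (act j g2 x)).
Proof. intro v. destruct (split_valid j x v) as [_ n].
  eapply req_trans; [|apply req_sym, act_norm; exact n].
  apply norm_compat. apply gmulA. Qed.
Lemma act_one j x : valid x -> req (act j (gone G) x) x.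
Proof. destruct x as [h w]; intros [vh vw]. unfold act, split; simpl in *.
  destruct w as [|[k c] w1]; simpl.
  - unfold norm. destruct (dec (H (gmul (gone G) h))) as [_|n].
    + split; simpl; auto. apply gmul1.
    + exfalso; apply n; eapply smem_compat; [symmetry; apply gmul1|auto].
  - destruct (Nat.eq_dec k j) as [->|kj]; simpl.
    + destruct vw as [nc [rc [_ _]]]. unfold norm.
      destruct (dec (H (gmul (gone G) (gmul h c)))) as [i|_].
      * exfalso; apply nc. eapply smem_compat; [|apply smemM; [apply smemV, vh|apply i]].
        rewrite gmul1. apply inv_mulK.
      * rewrite (rep_compat _ _ (gmul1 _)), rep_Hmul, rc by auto. split; simpl; auto.
        rewrite gmul1, gmulA, mulV_r, mul1_r. reflexivity.
    + unfold norm. destruct (dec (H (gmul (gone G) h))) as [_|n].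
      * split; simpl; auto. apply gmul1.
      * exfalso; apply n; eapply smem_compat; [symmetry; apply gmul1|auto].
Qed.
Lemma act_H j h x : H h -> valid x -> req (act j h x) (gmul h (fst x), snd x).
Proof. destruct x as [h0 w]; intros hh [vh vw]. unfold act, split; simpl in *.
  assert (HH : H (gmul h h0)) by (apply smemM; auto).
  destruct w as [|[k c] w1]; simpl.
  - unfold norm. destruct (dec (H (gmul h h0))) as [_|n]; [apply req_refl|contradiction].
  - destruct (Nat.eq_dec k j) as [->|kj]; simpl.
    + destruct vw as [nc [rc [_ _]]]. unfold norm.
      destruct (dec (H (gmul h (gmul h0 c)))) as [i|_].
      * exfalso; apply nc. eapply smem_compat; [|apply smemM; [apply smemV, HH|apply i]].
        rewrite <- (gmulA h h0 c). apply inv_mulK.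
      * rewrite <- (rep_compat _ _ (gmulA _ _ _)), rep_Hmul, rc by auto. split; simpl; auto.
        rewrite <- gmulA, gmulA, mulV_r, mul1_r. reflexivity.
    + unfold norm. destruct (dec (H (gmul h h0))) as [_|n]; [apply req_refl|contradiction].
Qed.

Definition X := {x : RX | valid x}.
Definition Xeq (a b : X) := req (proj1_sig a) (proj1_sig b).
Lemma Xeq_refl a : Xeq a a. Proof. apply req_refl. Qed.
Lemma Xeq_sym a b : Xeq a b -> Xeq b a. Proof. apply req_sym. Qed.
Lemma Xeq_trans a b c : Xeq a b -> Xeq b c -> Xeq a c. Proof. apply req_trans. Qed.
Definition actX j g (a : X) : X := exist _ (act j g (proj1_sig a)) (act_valid j g _ (proj2_sig a)).
Lemma actX_c j g : forall a b, Xeq a b -> Xeq (actX j g a) (actX j g b).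
Proof. intros a b e. apply act_compat; [reflexivity|exact e]. Qed.
Lemma actX_inv j g g' : geq (gmul g g') (gone G) -> forall a, Xeq (actX j g (actX j g' a)) a.
Proof. intros e a. unfold Xeq; simpl.
  eapply req_trans; [apply req_sym, act_mul, proj2_sig|].
  eapply req_trans; [apply act_compat; [exact e|apply req_refl]|].
  apply act_one, proj2_sig. Qed.
Definition SX := @Sym X Xeq Xeq_refl Xeq_sym Xeq_trans.
Definition actP j (g : G) : SX :=
  @Perm X Xeq (actX j g) (actX j (ginv g)) (actX_c j g) (actX_c j (ginv g))
     (actX_inv j g (ginv g) (mulV_r g)) (actX_inv j (ginv g) g (gmulV g)).
Lemma actP_hom j : is_hom (actP j).
Proof. split.
  - intros x y e a. apply act_compat; [exact e|apply req_refl].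
  - intros x y a. apply act_mul, proj2_sig. Qed.
Lemma actP_agree j k h : H h -> geq (actP j h) (actP k h).
Proof. intros hh a. unfold Xeq; simpl. eapply req_trans; [apply act_H; auto; apply proj2_sig|].
  apply req_sym, act_H; auto; apply proj2_sig. Qed.
Lemma base_valid : valid (gone G, []).
Proof. split; simpl; auto. apply smem1. Qed.
Definition base : X := exist _ _ base_valid.

Section Amalg.
Variable P : amalg H.
Fixpoint eval (w : list (nat * G)) : P :=
  match w with [] => gone P | (j, g) :: w' => gmul (ainj P j g) (eval w') end.

Theorem nf w : red w -> w <> [] -> ~ geq (eval w) (gone P).
Proof.
  destruct (auniv P (f := actP) actP_hom actP_agree) as [Phi [hPhi ePhi]].
  assert (key : forall w, red w ->
     map fst (snd (proj1_sig (@pf X Xeq (Phi (eval w)) base))) = map fst w).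
  { intro w0. induction w0 as [|[j g] ws IH]; simpl; intros r.
    - pose proof (hom_one Phi hPhi base) as e. destruct e as [_ e]. simpl in e. rewrite e. reflexivity.
    - destruct r as [ng [nj r]].
      pose proof (proj2 hPhi (ainj P j g) (eval ws) base) as e1.
      pose proof (ePhi j g (@pf X Xeq (Phi (eval ws)) base)) as e2.
      destruct e1 as [_ e1]; destruct e2 as [_ e2]; simpl in e1, e2.
      rewrite e1, e2. clear e1 e2. specialize (IH r).
      set (x' := @pf X Xeq (Phi (eval ws)) base) in *.
      destruct x' as [[h' l'] [vh vl]]; simpl in *.
      unfold act. rewrite split_ne by (simpl; eapply hd_ne_map; [symmetry; exact IH|exact nj]).
      simpl. unfold norm. destruct (dec (H (gmul g h'))) as [i|_].
      + exfalso; apply ng. eapply smem_compat; [|apply smemM; [apply i|apply smemV, vh]].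
        rewrite gmulA, mulV_r, mul1_r; reflexivity.
      + simpl. rewrite IH. reflexivity. }
  intros r ne e. apply ne. specialize (key w r).
  assert (E : geq (Phi (eval w)) (gone SX)).
  { eapply geq_trans; [apply (proj1 hPhi); exact e|]. apply (hom_one Phi hPhi). }
  destruct (E base) as [_ E2]. simpl in E2. rewrite E2 in key. simpl in key.
  destruct w; [reflexivity|discriminate]. Qed.
End Amalg.
End NF.

Section Gen.
Context {G : grp} (H : subgrp G) (P : amalg H).
Definition S (a : P) := exists w, geq a (eval H P w).
Lemma S_compat a b : geq a b -> S a -> S b.
Proof. intros e [w k]. exists w. rewrite <- e; auto. Qed.
Definition X2 := (car P * bool)%type.
Definition x2eq (x y : X2) := geq (fst x) (fst y) /\ snd x = snd y.
Lemma x2_refl x : x2eq x x. Proof. split; reflexivity. Qed.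
Lemma x2_sym x y : x2eq x y -> x2eq y x. Proof. intros [a b]; split; symmetry; auto. Qed.
Lemma x2_trans x y z : x2eq x y -> x2eq y z -> x2eq x z.
Proof. intros [a b] [c d]; split; [rewrite a; auto|congruence]. Qed.
Definition lmul (a : P) (x : X2) : X2 := (gmul a (fst x), snd x).
Definition sg (x : X2) : X2 := if dec (S (fst x)) then x else (fst x, negb (snd x)).
Lemma lmul_c a a' x y : geq a a' -> x2eq x y -> x2eq (lmul a x) (lmul a' y).
Proof. intros e [k l]; split; simpl; auto. rewrite e, k; reflexivity. Qed.
Lemma sg_c x y : x2eq x y -> x2eq (sg x) (sg y).
Proof. intros [k l]. unfold sg. destruct (dec (S (fst x))) as [s|s], (dec (S (fst y))) as [t|t].
  - split; auto.
  - exfalso; apply t; eapply S_compat; eauto.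
  - exfalso; apply s; eapply S_compat; [symmetry|]; eauto.
  - split; simpl; auto. congruence. Qed.
Lemma sg_sg x : sg (sg x) = x.
Proof. unfold sg at 2. destruct (dec (S (fst x))) as [s|s].
  - unfold sg. destruct (dec (S (fst x))); tauto.
  - unfold sg; simpl. destruct (dec (S (fst x))); [tauto|]. destruct x as [a b]; simpl.
    rewrite Bool.negb_involutive; auto. Qed.
Lemma lmul_inv a b x : geq (gmul a b) (gone P) -> x2eq (lmul a (lmul b x)) x.
Proof. intro e. split; simpl; auto. rewrite <- gmulA, e, gmul1. reflexivity. Qed.
Arguments lmul_c {a a' x y}. Arguments lmul_inv {a b} x. Arguments sg_c {x y}.
Definition phiP (a : P) : perm X2 x2eq :=
  @Perm X2 x2eq (lmul a) (lmul (ginv a))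
   (fun x y h => lmul_c (geq_refl a) h) (fun x y h => lmul_c (geq_refl _) h)
   (fun x => lmul_inv x (mulV_r a)) (fun x => lmul_inv x (gmulV a)).
Lemma psi_c a : forall x y, x2eq x y -> x2eq (sg (lmul a (sg x))) (sg (lmul a (sg y))).
Proof. intros x y h. apply sg_c, lmul_c; [reflexivity|apply sg_c, h]. Qed.
Lemma psi_inv a b : geq (gmul a b) (gone P) ->
  forall x, x2eq (sg (lmul a (sg (sg (lmul b (sg x)))))) x.
Proof. intros e x. rewrite sg_sg. rewrite <- (sg_sg x) at 2. apply sg_c, lmul_inv, e. Qed.
Arguments psi_inv {a b}.
Definition psiP (a : P) : perm X2 x2eq :=
  @Perm X2 x2eq (fun x => sg (lmul a (sg x))) (fun x => sg (lmul (ginv a) (sg x)))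
   (psi_c a) (psi_c (ginv a)) (psi_inv (mulV_r a)) (psi_inv (gmulV a)).
Definition SY := @Sym X2 x2eq x2_refl x2_sym x2_trans.
Lemma phiP_hom : is_hom (L := SY) phiP.
Proof. split.
  - intros a b e x. apply lmul_c; [exact e|apply x2_refl].
  - intros a b x. split; simpl; auto. apply gmulA. Qed.
Lemma psiP_hom : is_hom (L := SY) psiP.
Proof. split.
  - intros a b e x. apply sg_c, lmul_c; [exact e|apply x2_refl].
  - intros a b x. simpl. rewrite sg_sg. apply sg_c. split; simpl; auto. apply gmulA. Qed.

Theorem gen (a : P) : S a.
Proof.
  assert (E : forall x, geq (g := SY) (psiP x) (phiP x)).
  { apply (auniq psiP_hom phiP_hom). intros j g [y b]. simpl.
    assert (SS : S (gmul (ainj P j g) y) <-> S y).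
    { split.
      - intros [w k]. exists ((j, ginv g) :: w). simpl.
        rewrite <- k. rewrite (hom_inv (ainj P j) g (ainj_hom P j)).
        rewrite inv_mulK. reflexivity.
      - intros [w k]. exists ((j, g) :: w). simpl. rewrite k. reflexivity. }
    unfold sg; simpl. destruct (dec (S y)) as [s|s]; simpl.
    - destruct (dec (S (gmul (ainj P j g) y))) as [t|t]; [apply x2_refl|tauto].
    - destruct (dec (S (gmul (ainj P j g) y))) as [t|t]; [tauto|].
      split; simpl; [reflexivity|apply Bool.negb_involutive]. }
  specialize (E a (gone P, false)). simpl in E.
  assert (S1 : S (gone P)) by (exists []; reflexivity).
  unfold sg in E at 2; simpl in E. destruct (dec (S (gone P))) as [_|n]; [|tauto].
  unfold sg in E; simpl in E. destruct (dec (S (gmul a (gone P)))) as [s|s].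
  - eapply S_compat; [apply mul1_r|exact s].
  - destruct E as [_ E]. discriminate.
Qed.
End Gen.

Section Red.
Context {G : grp} (H : subgrp G) (P : amalg H).
Lemma agree_mul j k g h : H h -> geq (gmul (ainj P j g) (ainj P k h)) (ainj P j (gmul g h)).
Proof. intro hh. rewrite (ainj_agree P k j hh). symmetry. apply (proj2 (ainj_hom P j)). Qed.

Definition RP (a : P) := (exists h, H h /\ geq a (ainj P 0 h)) \/
   (exists w', red H w' /\ w' <> [] /\ geq a (eval H P w')).
Lemma RP_compat a b : geq a b -> RP b -> RP a.
Proof. intros e [[h [k l]]|[w [k [l m]]]]; [left|right].
  - exists h. split; auto. rewrite e; auto.
  - exists w. repeat split; auto. rewrite e; auto. Qed.
Lemma reduce w : RP (eval H P w).
Proof.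
  unfold RP at 1.
  induction w as [|[j g] w IH]; simpl.
  - left. exists (gone G). split; [apply smem1|]. symmetry. apply (hom_one _ (ainj_hom P 0)).
  - destruct IH as [[h [hh e]] | [w' [r [ne e]]]].
    + apply (RP_compat _ (ainj P j (gmul g h))). rewrite e, agree_mul by exact hh. reflexivity.
      unfold RP.
      destruct (classic (H (gmul g h))) as [i|i].
      * left. exists (gmul g h). split; auto. apply ainj_agree; auto.
      * right. exists [(j, gmul g h)]. simpl. repeat split; auto. discriminate.
        symmetry; apply mul1_r.
    + apply (RP_compat _ (gmul (ainj P j g) (eval H P w'))). rewrite e; reflexivity.
      unfold RP.
      destruct w' as [|[j1 g1] w'']; [congruence|]. simpl in r |- *.
      destruct r as [n1 [hd1 r1]].
      destruct (Nat.eq_dec j1 j) as [<-|jj].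
      * apply (RP_compat _ (gmul (ainj P j1 (gmul g g1)) (eval H P w''))).
        { rewrite <- gmulA, <- (proj2 (ainj_hom P j1)). reflexivity. }
        unfold RP.
        destruct (classic (H (gmul g g1))) as [i|i].
        -- destruct w'' as [|[j2 g2] w3]; simpl.
           ++ left. exists (gmul g g1). split; auto. rewrite mul1_r. apply ainj_agree; auto.
           ++ simpl in r1. destruct r1 as [n2 [hd2 r2]].
              right. exists ((j2, gmul (gmul g g1) g2) :: w3). simpl.
              repeat split; auto.
              ** intro k. apply n2. eapply smem_compat; [|apply smemM; [apply smemV, i|apply k]].
                 apply inv_mulK.
              ** discriminate.
              ** rewrite <- (gmulA (ainj P j1 (gmul g g1))). apply gmul_compat; [|reflexivity].
                 rewrite (ainj_agree P j1 j2 i). symmetry. apply (proj2 (ainj_hom P j2)).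
        -- right. exists ((j1, gmul g g1) :: w''). simpl. repeat split; auto. discriminate. reflexivity.
      * destruct (classic (H g)) as [i|i].
        -- right. exists ((j1, gmul g g1) :: w''). simpl. repeat split; auto.
           ++ intro k. apply n1. eapply smem_compat; [|apply smemM; [apply smemV, i|apply k]].
              apply inv_mulK.
           ++ discriminate.
           ++ rewrite <- (gmulA (ainj P j g)). apply gmul_compat; [|reflexivity].
              rewrite (ainj_agree P j j1 i). symmetry. apply (proj2 (ainj_hom P j1)).
        -- right. exists ((j, g) :: (j1, g1) :: w''). simpl. repeat split; auto. discriminate. reflexivity.
Qed.

Lemma retract_inj (j : nat) (g : G) : geq (ainj P j g) (gone P) -> geq g (gone G).
Proof.
  intro e.
  assert (hid : forall j : nat, is_hom (fun x : G => x)) by (intros; split; intros; [auto|reflexivity]).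
  destruct (auniv P (f := fun _ x => x) hid (fun j k h _ => geq_refl h)) as [r [hr er]].
  rewrite <- (er j g). rewrite (proj1 hr _ _ e). apply (hom_one _ hr).
Qed.
End Red.

Section Main.
Variables (G : nat -> grp) (H : forall i, subgrp (G i))
  (U : (nat -> Prop) -> Prop) (hU0 : is_ultrafilter U).

Definition proj_w (i : nat) (w : list (nat * car (ultraprod G hU0))) : list (nat * G i) :=
  map (fun p => (fst p, snd p i)) w.

Lemma red_U w : red (ultrasub hU0 H) w -> U (fun i => red (H i) (proj_w i w)).
Proof.
  induction w as [|[j g] w IH]; simpl; intro r.
  - eapply (uf_mono hU0); [|exact (uf_full hU0)]. simpl; auto.
  - destruct r as [n [hd r]]. specialize (IH r).
    assert (U (fun i => ~ H i (g i))).
    { destruct (uf_ultra hU0 (fun i => H i (g i))) as [k|k]; [contradiction|exact k]. }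
    eapply (uf_mono hU0); [|exact (uf_inter hU0 H0 IH)]. simpl. intros i [a b].
    repeat split; auto. eapply hd_ne_map; [|exact hd]. unfold proj_w. rewrite map_map. reflexivity.
Qed.

Lemma U_nonempty (P : nat -> Prop) : U P -> exists i, P i.
Proof. intro u. apply NNPP. intro n. apply (uf_empty hU0).
  eapply (uf_mono hU0); [|exact u]. intros i p. apply n. exists i; auto. Qed.

End Main.

Theorem lemma2p5
  (G : nat -> grp) (H : forall i, subgrp (G i))
  (U : (nat -> Prop) -> Prop) (hU : is_free_ultrafilter U)
  (A : amalg (ultrasub (proj1 hU) H))
  (B : forall i, amalg (H i))
  (phi : A -> ultraprod (fun i => apg (B i)) (proj1 hU)) :
  is_hom phi ->
  (forall (j : nat) (g : ultraprod G (proj1 hU)),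
      geq (phi (ainj A j g)) (fun i => ainj (B i) j (g i))) ->
  ginjective phi.
Proof.
  intros hphi hinj x y e.
  set (hU0 := proj1 hU) in *.
  set (Hu := ultrasub hU0 H) in *.
  assert (phi_eval : forall w, geq (phi (eval Hu A w))
      (fun i => eval (H i) (B i) (proj_w G U hU0 i w))).
  { induction w as [|[j g] w IH]; unfold proj_w in *; cbn [eval map fst snd].
    - eapply geq_trans; [apply (hom_one _ hphi)|].
      eapply (uf_mono hU0); [|exact (uf_full hU0)]. intros i _. simpl. apply geq_refl.
    - eapply geq_trans; [apply (proj2 hphi)|].
      eapply geq_trans; [apply gmul_compat; [apply hinj|apply IH]|].
      eapply (uf_mono hU0); [|exact (uf_full hU0)]. intros i _. simpl. apply geq_refl. }
  set (z := gmul x (ginv y)).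
  assert (ez : geq (phi z) (gone _)).
  { unfold z. eapply geq_trans; [apply (proj2 hphi)|].
    rewrite (hom_inv phi y hphi), e. apply mulV_r. }
  apply eq_of_mulinv. fold z.
  destruct (gen Hu A z) as [w ew].
  destruct (reduce Hu A w) as [[h [hh eh]] | [w' [r [ne e']]]].
  -
    assert (E : geq (phi (ainj A 0 h)) (gone _)).
    { eapply geq_trans; [apply (proj1 hphi)|exact ez]. symmetry. rewrite ew. exact eh. }
    pose proof (geq_trans (geq_sym (hinj 0 h)) E) as E2. clear E. rename E2 into E.
    assert (h1 : geq (g := ultraprod G hU0) h (gone _)).
    { eapply (uf_mono hU0); [|exact E]. intros i k. simpl in k |- *.
      exact (retract_inj (H i) (B i) 0 (h i) k). }
    rewrite ew, eh. eapply geq_trans; [apply (proj1 (ainj_hom A 0)), h1|]. apply (hom_one _ (ainj_hom A 0)).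
  - exfalso.
    assert (E : geq (phi (eval Hu A w')) (gone _)).
    { eapply geq_trans; [apply (proj1 hphi)|exact ez]. symmetry. rewrite ew. exact e'. }
    pose proof (geq_trans (geq_sym (phi_eval w')) E) as E2. clear E. rename E2 into E.
    pose proof (red_U G H U hU0 w' r) as R.
    destruct (U_nonempty U hU0 _ (uf_inter hU0 E R)) as [i [k1 k2]].
    apply (nf (H i) (B i) (proj_w G U hU0 i w') k2); [|exact k1].
    destruct w'; [congruence|discriminate].
Qed.
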